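(* Let the problem data, partition, residuals, augmented Lagrangian and primal updates be as described in the context, and let $\{\mu^{c,k}_i\}_{k\ge 0}$, $c\in\mathcal{C}$, $i=1,\dots,N$, be arbitrary dual sequences with $\mu^{F,k}_i\ge 0$ componentwise for all $k$. Let the primal sequences $\{X^k_i, Z^k, Y^{c,k}_i\}$ be generated by the updates (U1)–(U3) from arbitrary initial values $X^0_i\in[-u,u]$, $Z^0\in[-u,u]$, $Y^{c,0}_i\in[0,u^c_{Y_i}]$. Then for every $k\ge 0$, $$ L^k\;\ge\; L^{k+1}+D^k+P^k+\sum_{i=1}^N\sum_{l=1}^M\Big({}^{1}\sigma^k_{i,l}\,\|X^k_{i,l}-X^{k+1}_{i,l}\|_1+U^k_{i,l}\Big), $$ where $$ L^k:=\sum_{i=1}^N L_i\big(X^k_i,Z^k,(Y^{c,k}_i)_c,(\mu^{c,k}_i)_c\big),\qquad D^k:=\sum_{i=1}^N\sum_{c\in\mathcal C}\big\langle \mu^{c,k}_i-\mu^{c,k+1}_i,\ r^{c,k+1}_i\big\rangle, $$ with $r^{c,k+1}_i:=r^c_i(X^{k+1}_i,Z^{k+1},Y^{c,k+1}_i)$; $$ P^k:=\sum_{i=1}^N\Big[\sum_{l}{}^{2}\sigma^k_{i,l}\|X^{k+1}_{i,l}-X^k_{i,l}\|^2+\rho_i\|X^{k+1}_i-X^k_i\|^2+(\tau^k+\rho_i)\|Z^{k+1}-Z^k\|^2+\sum_{c\in\mathcal C}\Big(\gamma^{c,k}_i+\tfrac{\rho_i}{2}\Big)\|Y^{c,k+1}_i-Y^{c,k}_i\|^2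 $$ $$ \qquad+\tfrac{\rho_i}{2}\sum_{l}\Big(\|F_i(X^{k+1,k+1}_{i,l})-F_i(X^{k+1,k}_{i,l})\|^2+\|G_{i,l}(X^{k+1}_{i,l}-X^k_{i,l})\|^2+2\|H_{i,l}(X^{k+1}_{i,l}-X^k_{i,l})\|^2\Big)\Big]; $$ and $$ U^k_{i,l}:=\Big\langle \mu^{F,k}_i+\rho_i\big(F_i(X^{k+1,k+1}_{i,l})+Y^{F,k}_i\big),\ F_i(X^{k+1,k}_{i,l})-F_i(X^{k+1,k+1}_{i,l})-\big(\nabla_{X_{i,l}}F_i(X^{k+1,k+1}_{i,l})\big)^{\!T}\!\!\cdot(X^k_{i,l}-X^{k+1}_{i,l})\Big\rangle, $$ where the last product denotes the vector whose $j$-th entry is $(X^k_{i,l}-X^{k+1}_{i,l})^T\nabla_{X_{i,l}}(F_i)_j(X^{k+1,k+1}_{i,l})$.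
   Context: Problem data. $n,N,M\in\mathbb N$. $u\in\mathbb R^n$ with $u>0$. $f(Z)=\langle f_0,Z\rangle$ is linear on $\mathbb R^n$. For each $i=1,\dots,N$: $F_i:\mathbb R^n\to\mathbb R^{p_i}$ has convex quadratic components (each component of the form $a(Z)+c(Z)^2$ or $c(Z)^2-a(Z)b(Z)$ with $a,b,c$ affine, convex on $[-u,u]$); $G_i:\mathbb R^n\to\mathbb R^{q_i}$ and $H_i:\mathbb R^n\to\mathbb R^{s_i}$ are affine. Vectors in $\mathbb R^n$ are partitioned into $M$ disjoint subvectors $Z=(Z_1,\dots,Z_M)$, $Z_l\in\mathbb R^{m_l}$, $\sum_l m_l=n$, the same partition for every $X_i\in\mathbb R^n$; correspondingly $u=(u_1,\dots,u_M)$, $f(Z)=\sum_l\langle f_l,Z_l\rangle$, $G_i(Z)=\sum_l G_{i,l}Z_l+G_{i,0}$, $H_i(Z)=\sum_l H_{i,l}Z_l+H_{i,0}$ with matrices $G_{i,l},H_{i,l}$. Slack variables and residuals. Let $\mathcal C=\{pX,nX,F,G,pH,nH\}$. For each $i$ there are slack vectors $Y^{pX}_i,Y^{nX}_i\in\mathbb R^n$, $Y^F_i\in\mathbb R^{p_i}$, $Y^G_i\in\mathbb R^{q_i}$, $Y^{pH}_i,Y^{nH}_i\in\mathbb R^{s_i}$, with given positive upper bound vectors $u^c_{Y_i}$ (slack boxes $[0,u^c_{Y_i}]$), and dual vectors $\mu^c_i$ of the same sizes. Residuals: $r^{pX}_i=X_i-Z+Y^{pX}_i$, $r^{nX}_i=Z-X_i+Y^{nX}_i$,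 $r^F_i=F_i(X_i)+Y^F_i$, $r^G_i=G_i(X_i)+Y^G_i$, $r^{pH}_i=H_i(X_i)+Y^{pH}_i$, $r^{nH}_i=-H_i(X_i)+Y^{nH}_i$. With $\rho_i>0$, the augmented Lagrangian of block $i$ is $$L_i=f(X_i)+\sum_{c\in\mathcal C}\langle\mu^c_i,r^c_i\rangle+\frac{\rho_i}{2}\sum_{c\in\mathcal C}\|r^c_i\|^2.$$ Gauss–Seidel notation: $X^{k+1,k}_{i,l}:=(X^{k+1}_{i,1},\dots,X^{k+1}_{i,l-1},X^k_{i,l},X^k_{i,l+1},\dots,X^k_{i,M})$ and $X^{k+1,k+1}_{i,l}:=(X^{k+1}_{i,1},\dots,X^{k+1}_{i,l},X^k_{i,l+1},\dots,X^k_{i,M})$. Parameters: ${}^{1}\sigma^k_{i,l}\ge0$, ${}^{2}\sigma^k_{i,l}>0$, $\tau^k>0$, $\gamma^{c,k}_i>0$. Updates at iteration $k$ (for each $i$): (U1) For $l=1,\dots,M$ in order, $X^{k+1}_{i,l}$ is the minimizer over $X_{i,l}\in[-u_l,u_l]$ of $L_i\big((X^{k+1}_{i,1},\dots,X^{k+1}_{i,l-1},X_{i,l},X^k_{i,l+1},\dots,X^k_{i,M}),Z^k,(Y^{c,k}_i)_c,(\mu^{c,k}_i)_c\big)+{}^{1}\sigma^k_{i,l}\|X_{i,l}-X^k_{i,l}\|_1+\tfrac{{}^{2}\sigma^k_{i,l}}{2}\|X_{i,l}-X^k_{i,l}\|^2$. (U2) $Z^{k+1}$ is the minimizer over $Z\in[-u,u]$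 of $\sum_{i=1}^N\Big(\langle\mu^{pX,k}_i,X^{k+1}_i-Z+Y^{pX,k}_i\rangle+\langle\mu^{nX,k}_i,Z-X^{k+1}_i+Y^{nX,k}_i\rangle+\tfrac{\rho_i}{2}\big(\|X^{k+1}_i-Z+Y^{pX,k}_i\|^2+\|Z-X^{k+1}_i+Y^{nX,k}_i\|^2\big)+\tfrac{\tau^k}{2}\|Z-Z^k\|^2\Big)$. (U3) For each $c\in\mathcal C$, $Y^{c,k+1}_i$ is the minimizer over $Y\in[0,u^c_{Y_i}]$ of $\langle\mu^{c,k}_i,r^c_i(X^{k+1}_i,Z^{k+1},Y)\rangle+\tfrac{\rho_i}{2}\|r^c_i(X^{k+1}_i,Z^{k+1},Y)\|^2+\tfrac{\gamma^{c,k}_i}{2}\|Y-Y^{c,k}_i\|^2$, where $r^c_i(X_i,Z,Y)$ denotes the residual $r^c_i$ with $Y^c_i=Y$. *)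

(* Defs.v *)
From HB Require Import structures.
From mathcomp Require Import all_boot all_order all_algebra.
From mathcomp Require Import all_classical all_reals all_analysis.
Set Implicit Arguments.
Unset Strict Implicit.
Unset Printing Implicit Defensive.
Import Order.TTheory GRing.Theory Num.Theory.
Import numFieldNormedType.Exports.
Local Open Scope ring_scope.

Section Defs.
Variable R : realType.

Definition dotv m (a b : 'rV[R]_m) : R := \sum_(j < m) a ord0 j * b ord0 j.
Definition sqn m (a : 'rV[R]_m) : R := dotv a a.

Definition inbox m (u X : 'rV[R]_m) : Prop :=
  forall j, - u ord0 j <= X ord0 j <= u ord0 j.
Definition inslackbox m (w Y : 'rV[R]_m) : Prop :=
  forall j, 0 <= Y ord0 j <= w ord0 j.

Definition affine_fun n (a : 'rV[R]_n -> R) : Prop :=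
  exists (w : 'rV[R]_n) (b : R), forall X, a X = dotv w X + b.

Definition convex_on_box n (u : 'rV[R]_n) (g : 'rV[R]_n -> R) : Prop :=
  forall X Y (t : R), inbox u X -> inbox u Y -> 0 <= t <= 1 ->
    g (t *: X + (1 - t) *: Y) <= t * g X + (1 - t) * g Y.

Definition quad_comp n (u : 'rV[R]_n) (g : 'rV[R]_n -> R) : Prop :=
  (exists a b c : 'rV[R]_n -> R, [/\ affine_fun a, affine_fun b, affine_fun c &
     (forall X, g X = a X + c X ^+ 2) \/ (forall X, g X = c X ^+ 2 - a X * b X)])
  /\ convex_on_box u g.

(* Problem data: f(Z) = <f0,Z>, F_i, G_i(Z) = Z *m GM_i + G0_i,
   H_i(Z) = Z *m HM_i + H0_i (row-vector convention). *)
Record problem (n N : nat) := Problem {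
  f0 : 'rV[R]_n;
  pdim : 'I_N -> nat;
  qdim : 'I_N -> nat;
  sdim : 'I_N -> nat;
  Ff : forall i, 'rV[R]_n -> 'rV[R]_(pdim i);
  GM : forall i, 'M[R]_(n, qdim i);
  G0 : forall i, 'rV[R]_(qdim i);
  HM : forall i, 'M[R]_(n, sdim i);
  H0 : forall i, 'rV[R]_(sdim i) }.

Definition F_admissible n N (P : problem n N) (u : 'rV[R]_n) : Prop :=
  forall i (j : 'I_(pdim P i)), quad_comp u (fun X => Ff P i X ord0 j).

End Defs.

Inductive cls := cpX | cnX | cF | cG | cpH | cnH.
Definition clist : seq cls := [:: cpX; cnX; cF; cG; cpH; cnH].

Section Alg.
Variables (R : realType) (n N M : nat) (P : problem R n N).

Definition cdim (i : 'I_N) (c : cls) : nat :=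
  match c with
  | cpX | cnX => n
  | cF => pdim P i
  | cG => qdim P i
  | cpH | cnH => sdim P i
  end.

(* families indexed by classes: slacks Y_i^c, duals mu_i^c, bounds u^c_{Y_i} *)
Definition cfam (i : 'I_N) := forall c : cls, 'rV[R]_(cdim i c).

Definition resid (i : 'I_N) (X Z : 'rV[R]_n) (c : cls) :
  'rV[R]_(cdim i c) -> 'rV[R]_(cdim i c) :=
  match c as c0 return 'rV[R]_(cdim i c0) -> 'rV[R]_(cdim i c0) with
  | cpX => fun y => X - Z + y
  | cnX => fun y => Z - X + y
  | cF => fun y => Ff P i X + y
  | cG => fun y => X *m GM P i + G0 P i + y
  | cpH => fun y => X *m HM P i + H0 P i + y
  | cnH => fun y => - (X *m HM P i + H0 P i) + y
  end.

Definition Lag (rho : 'I_N -> R) (i : 'I_N) (X Z : 'rV[R]_n) (Y mu : cfam i) : R :=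
  dotv (f0 P) X
  + \sum_(c <- clist) dotv (mu c) (@resid i X Z c (Y c))
  + rho i / 2 * \sum_(c <- clist) sqn (@resid i X Z c (Y c)).

Variable blk : 'I_n -> 'I_M.

(* block l of a vector, padded by zeros in the other coordinates
   (so that G_{i,l} Z_l = blockv l Z *m GM_i, etc.) *)
Definition blockv (l : 'I_M) (X : 'rV[R]_n) : 'rV[R]_n :=
  \row_j (if blk j == l then X ord0 j else 0).

Definition l1blk (l : 'I_M) (X : 'rV[R]_n) : R :=
  \sum_(j < n | blk j == l) `|X ord0 j|.

(* Gauss-Seidel points X^{k+1,k}_{i,l} (gsS) and X^{k+1,k+1}_{i,l} (gsI) *)
Definition gsS (Xn Xo : 'rV[R]_n) (l : 'I_M) : 'rV[R]_n :=
  \row_j (if (blk j < l)%N then Xn ord0 j else Xo ord0 j).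
Definition gsI (Xn Xo : 'rV[R]_n) (l : 'I_M) : 'rV[R]_n :=
  \row_j (if (blk j <= l)%N then Xn ord0 j else Xo ord0 j).

Definition repl (l : 'I_M) (X W : 'rV[R]_n) : 'rV[R]_n :=
  \row_j (if blk j == l then W ord0 j else X ord0 j).

Definition inbox_blk (u : 'rV[R]_n) (l : 'I_M) (W : 'rV[R]_n) : Prop :=
  forall j, blk j == l -> - u ord0 j <= W ord0 j <= u ord0 j.

Variables (rho : 'I_N -> R)
  (X : nat -> 'I_N -> 'rV[R]_n) (Z : nat -> 'rV[R]_n)
  (Y : nat -> forall i : 'I_N, cfam i) (mu : nat -> forall i : 'I_N, cfam i)
  (sigma1 sigma2 : nat -> 'I_N -> 'I_M -> R) (tau : nat -> R)
  (gamma : nat -> 'I_N -> cls -> R).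

(* objective of the block update (U1); only block l of W matters *)
Definition objX (k : nat) (i : 'I_N) (l : 'I_M) (W : 'rV[R]_n) : R :=
  @Lag rho i (repl l (gsS (X k.+1 i) (X k i) l) W) (Z k) (Y k i) (mu k i)
  + sigma1 k i l * l1blk l (W - X k i)
  + sigma2 k i l / 2 * sqn (blockv l (W - X k i)).

Definition objZ (k : nat) (W : 'rV[R]_n) : R :=
  \sum_(i < N)
    (dotv (mu k i cpX) (X k.+1 i - W + Y k i cpX)
     + dotv (mu k i cnX) (W - X k.+1 i + Y k i cnX)
     + rho i / 2 * (sqn (X k.+1 i - W + Y k i cpX)
                    + sqn (W - X k.+1 i + Y k i cnX))
     + tau k / 2 * sqn (W - Z k)).

Definition objY (k : nat) (i : 'I_N) (c : cls) (y : 'rV[R]_(cdim i c)) : R :=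
  dotv (mu k i c) (@resid i (X k.+1 i) (Z k.+1) c y)
  + rho i / 2 * sqn (@resid i (X k.+1 i) (Z k.+1) c y)
  + gamma k i c / 2 * sqn (y - Y k i c).

Definition Ltot (k : nat) : R :=
  \sum_(i < N) @Lag rho i (X k i) (Z k) (Y k i) (mu k i).

Definition Dk (k : nat) : R :=
  \sum_(i < N) \sum_(c <- clist)
     dotv (mu k i c - mu k.+1 i c) (@resid i (X k.+1 i) (Z k.+1) c (Y k.+1 i c)).

Definition Pk (k : nat) : R :=
  \sum_(i < N)
   ( \sum_(l < M) sigma2 k i l * sqn (blockv l (X k.+1 i - X k i))
   + rho i * sqn (X k.+1 i - X k i)
   + (tau k + rho i) * sqn (Z k.+1 - Z k)
   + \sum_(c <- clist) (gamma k i c + rho i / 2) * sqn (Y k.+1 i c - Y k i c)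
   + rho i / 2 * \sum_(l < M)
       ( sqn (Ff P i (gsI (X k.+1 i) (X k i) l) - Ff P i (gsS (X k.+1 i) (X k i) l))
       + sqn (blockv l (X k.+1 i - X k i) *m GM P i)
       + 2 * sqn (blockv l (X k.+1 i - X k i) *m HM P i))).

(* U^k_{i,l}; the term (grad_{X_{i,l}} F_i(x))^T (X^k_{i,l} - X^{k+1}_{i,l})
   is the differential 'd (F_i) x applied to the block-l vector
   X^k_{i,l} - X^{k+1}_{i,l} padded by zeros. *)
Definition Uk (k : nat) (i : 'I_N) (l : 'I_M) : R :=
  let xI := gsI (X k.+1 i) (X k i) l in
  let xS := gsS (X k.+1 i) (X k i) l in
  dotv (mu k i cF + rho i *: (Ff P i xI + Y k i cF))
       (Ff P i xS - Ff P i xI - 'd (Ff P i) xI (blockv l (X k i - X k.+1 i))).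

End Alg.

Arguments objY {R n N P} rho X Z Y mu gamma k i c y.
Arguments resid {R n N} P i X Z c _.
Arguments Lag {R n N} P rho i X Z Y mu.

(* Main.v *)
Require Import Defs.
From HB Require Import structures.
From mathcomp Require Import all_boot all_order all_algebra.
From mathcomp Require Import all_classical all_reals all_analysis.
From mathcomp Require Import ring lra.
Import Order.TTheory GRing.Theory Num.Theory.
Import numFieldNormedType.Exports.
Local Open Scope ring_scope.

Module MT1.
Set Implicit Arguments. Unset Strict Implicit.

Section Diff.
Variable R : realType.

Lemma coordZ_diff n (w : R) j (x : 'rV[R]_n) :
  differentiable (fun X : 'rV[R]_n => w * X ord0 j) x.
Proof.
have -> : (fun X : 'rV[R]_n => w * X ord0 j) = w *: (fun X : 'rV[R]_n => X ord0 j).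
  by apply/funext => X.
apply: differentiableZ; exact: differentiable_coord.
Qed.

Lemma affine_diff n (a : 'rV[R]_n -> R) x : affine_fun a -> differentiable a x.
Proof.
case=> w [b ha].
have -> : a = (\sum_(j < n) (fun X : 'rV[R]_n => w ord0 j * X ord0 j)) + cst b.
  by apply/funext => X; rewrite ha fct_sumE /dotv.
apply: differentiableD; last exact: differentiable_cst.
apply: differentiable_sum => j; exact: coordZ_diff.
Qed.

Lemma quad_diff n (u : 'rV[R]_n) g x : quad_comp u g -> differentiable g x.
Proof.
case=> -[a [b [c [ha hb hc [hg|hg]]]]] _.
  have -> : g = a + c * c by apply/funext => X; rewrite hg expr2.
  apply: differentiableD; first exact: affine_diff.
  by apply: differentiableM; exact: affine_diff.
have -> : g = c * c - a * b by apply/funext => X; rewrite hg expr2.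
apply: differentiableB.
  by apply: differentiableM; exact: affine_diff.
by apply: differentiableM; exact: affine_diff.
Qed.

Lemma vec_diff n p (F : 'rV[R]_n -> 'rV[R]_p) x :
  (forall j, differentiable (fun X => F X ord0 j) x) -> differentiable F x.
Proof.
move=> hj.
have -> : F = \sum_(j < p) (fun X => F X ord0 j *: (delta_mx ord0 j : 'rV[R]_p)).
  apply/funext => X; rewrite fct_sumE; apply/rowP => k.
  rewrite summxE (bigD1 k) //= !mxE eqxx mulr1 big1 ?addr0 // => j hjk.
  by rewrite !mxE (eq_sym k j) (negbTE hjk) andbF mulr0.
by apply: differentiable_sum => j; apply: differentiableZl.
Qed.

End Diff.

End MT1.
Import MT1.

Module MT2.
Set Implicit Arguments. Unset Strict Implicit.
Local Open Scope classical_set_scope.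


Section Diff.
Variable R : realType.

Lemma diff_quadpath n p (F : 'rV[R]_n -> 'rV[R]_p) x d L W :
  differentiable F x ->
  (forall t : R, F (x + t *: d) = F x + t *: L + t ^+ 2 *: W) ->
  'd F x d = L.
Proof.
move=> dF hF; rewrite -deriveE //.
rewrite /derive; apply: cvg_lim => //.
have -> : L = L + 0 *: W by rewrite scale0r addr0.
have hc : (fun h : R => L + h *: W) @ 0^' --> L + 0 *: W.
  apply: cvg_within_filter.
  apply: cvgD; first exact: cvg_cst.
  apply: cvgZ; [exact: cvg_id | exact: cvg_cst].
apply: cvg_trans hc.
apply: near_eq_cvg; near=> h.
have h0 : h != 0 by near: h; exact: nbhs_dnbhs_neq.
rewrite /= /shift [_ + x]addrC hF addrAC (addrAC (F x)) subrr add0r scalerDr !scalerA mulVf // scale1r.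
by rewrite expr2 mulrA mulVf // mul1r.
Unshelve. all: by end_near.
Qed.
End Diff.

End MT2.
Import MT2.

Module MT3.
Set Implicit Arguments. Unset Strict Implicit.

Section Alg.
Variable R : realType.
Implicit Types (m : nat).

Lemma dotvDr m (a b c : 'rV[R]_m) : dotv a (b + c) = dotv a b + dotv a c.
Proof. by rewrite /dotv -big_split; apply: eq_bigr => j _; rewrite mxE mulrDr. Qed.
Lemma dotvDl m (a b c : 'rV[R]_m) : dotv (b + c) a = dotv b a + dotv c a.
Proof. by rewrite /dotv -big_split; apply: eq_bigr => j _; rewrite mxE mulrDl. Qed.
Lemma dotvZr m (a b : 'rV[R]_m) t : dotv a (t *: b) = t * dotv a b.
Proof. by rewrite /dotv mulr_sumr; apply: eq_bigr => j _; rewrite mxE mulrCA. Qed.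
Lemma dotvZl m (a b : 'rV[R]_m) t : dotv (t *: b) a = t * dotv b a.
Proof. by rewrite /dotv mulr_sumr; apply: eq_bigr => j _; rewrite mxE mulrA. Qed.
Lemma dotvNr m (a b : 'rV[R]_m) : dotv a (- b) = - dotv a b.
Proof. by rewrite -scaleN1r dotvZr mulN1r. Qed.
Lemma dotvNl m (a b : 'rV[R]_m) : dotv (- b) a = - dotv b a.
Proof. by rewrite -scaleN1r dotvZl mulN1r. Qed.
Lemma dotvBr m (a b c : 'rV[R]_m) : dotv a (b - c) = dotv a b - dotv a c.
Proof. by rewrite dotvDr dotvNr. Qed.
Lemma dotvBl m (a b c : 'rV[R]_m) : dotv (b - c) a = dotv b a - dotv c a.
Proof. by rewrite dotvDl dotvNl. Qed.
Lemma dotvC m (a b : 'rV[R]_m) : dotv a b = dotv b a.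
Proof. by rewrite /dotv; apply: eq_bigr => j _; rewrite mulrC. Qed.
Lemma dotv0r m (a : 'rV[R]_m) : dotv a 0 = 0.
Proof. by rewrite /dotv big1 // => j _; rewrite mxE mulr0. Qed.
Lemma dotv0l m (a : 'rV[R]_m) : dotv 0 a = 0.
Proof. by rewrite dotvC dotv0r. Qed.
Lemma sqn_ge0 m (a : 'rV[R]_m) : 0 <= sqn a.
Proof. by rewrite /sqn /dotv sumr_ge0 // => j _; rewrite -expr2 sqr_ge0. Qed.
Lemma sqnD m (a b : 'rV[R]_m) : sqn (a + b) = sqn a + 2 * dotv a b + sqn b.
Proof. rewrite /sqn !dotvDl !dotvDr (dotvC b a); ring. Qed.
Lemma sqnZ m (a : 'rV[R]_m) t : sqn (t *: a) = t ^+ 2 * sqn a.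
Proof. rewrite /sqn dotvZl dotvZr; ring. Qed.
Lemma sqnN m (a : 'rV[R]_m) : sqn (- a) = sqn a.
Proof. by rewrite /sqn dotvNl dotvNr opprK. Qed.
Lemma sqnB m (a b : 'rV[R]_m) : sqn (a - b) = sqn (b - a).
Proof. by rewrite -sqnN opprB. Qed.
End Alg.

End MT3.
Import MT3.

Module MT5.
Set Implicit Arguments. Unset Strict Implicit.

Section Gen.
Variable R : realType.

Lemma lim0 (a K : R) : 0 <= K -> (forall t, 0 < t <= 1 -> - (t * K) <= a) -> 0 <= a.
Proof.
move=> K0 H; rewrite leNgt; apply/negP => a0.
have hKa : 0 < K - a by lra.
pose t := - a / (K - a).
have t0 : 0 < t by rewrite /t divr_gt0 // oppr_gt0.
have t1 : t <= 1 by rewrite /t ler_pdivrMr // mul1r; lra.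
have := H t; rewrite t0 t1 => /(_ isT).
have -> : t * K = - a * K / (K - a) by rewrite /t mulrAC.
rewrite -mulNr ler_pdivrMr // => h.
nra.
Qed.

Definition phi m (rho : R) (mm r p q : 'rV[R]_m) (t : R) :=
  dotv mm (r + t *: p + t ^+ 2 *: q) + rho / 2 * sqn (r + t *: p + t ^+ 2 *: q).

Lemma phiE m rho (mm r p q : 'rV[R]_m) t :
  phi rho mm r p q t = dotv mm r + rho / 2 * sqn r
    + t * (dotv mm p + rho * dotv r p)
    + t ^+ 2 * ((dotv mm q + rho * dotv r q + rho / 2 * sqn p)
                + t * (rho * dotv p q) + t ^+ 2 * (rho / 2 * sqn q)).
Proof.
rewrite /phi /sqn !(dotvDr, dotvDl, dotvZr, dotvZl) (dotvC p r) (dotvC q r) (dotvC q p).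
by field.
Qed.

Lemma phi_ub m rho (mm r p q : 'rV[R]_m) t : 0 <= t <= 1 ->
  phi rho mm r p q t <= phi rho mm r p q 0 + t * (dotv mm p + rho * dotv r p)
    + t ^+ 2 * (`|dotv mm q + rho * dotv r q + rho / 2 * sqn p|
                + `|rho * dotv p q| + `|rho / 2 * sqn q|).
Proof.
move=> /andP[t0 t1].
rewrite !phiE expr0n /= !mul0r !addr0.
set b2 := dotv mm q + _ + _; set b3 := rho * dotv p q; set b4 := rho / 2 * sqn q.
have h2 := ler_norm b2; have h3 := ler_norm b3; have h4 := ler_norm b4.
have n3 := normr_ge0 b3; have n4 := normr_ge0 b4.
have h3' : t * b3 <= `|b3| by nra.
have tt : 0 <= t ^+ 2 by rewrite sqr_ge0.
have t21 : t ^+ 2 <= 1 by rewrite expr_le1.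
have h4'' : t ^+ 2 * b4 <= t ^+ 2 * `|b4| by rewrite ler_wpM2l.
have h4' : t ^+ 2 * b4 <= `|b4| by nra.
have hin : b2 + t * b3 + t ^+ 2 * b4 <= `|b2| + `|b3| + `|b4| by lra.
have := ler_wpM2l tt hin.
lra.
Qed.

Lemma phi1 m rho (mm r p q : 'rV[R]_m) :
  phi rho mm r p q 1 = phi rho mm r p q 0 + (dotv mm p + rho * dotv r p)
    + (dotv (mm + rho *: r) q + rho / 2 * sqn (p + q)).
Proof.
rewrite !phiE sqnD dotvDl dotvZl expr0n /= expr1n; by field.
Qed.

Lemma box_conv (lo hi a b t : R) : lo <= a <= hi -> lo <= b <= hi -> 0 <= t <= 1 ->
  lo <= a + t * (b - a) <= hi.
Proof. move=> /andP[h1 h2] /andP[h3 h4] /andP[h5 h6]; apply/andP; split; nra. Qed.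

Lemma quad_min (q : R -> R) al ga :
  (forall t, q t = q 0 + t * al + t ^+ 2 * ga) ->
  (forall t, 0 < t <= 1 -> q 0 <= q t) ->
  ga <= q 1 - q 0.
Proof.
move=> hq hmin.
have : 0 <= al.
  apply: (@lim0 al `|ga|) => // t /andP[t0 t1].
  have := hmin t; rewrite t0 t1 => /(_ isT); rewrite (hq t) => h.
  have hg := ler_norm (- ga); rewrite normrN in hg.
  have : 0 <= t * al + t ^+ 2 * ga by lra.
  rewrite expr2 -mulrA -mulrDr pmulr_rge0 // => h'.
  have : 0 <= t * (`|ga| - ga) by apply: mulr_ge0; [lra | rewrite subr_ge0 ler_norm].
  lra.
rewrite (hq 1) expr1n mul1r mul1r; lra.
Qed.
End Gen.

Section Gen2.
Variable R : realType.
Lemma phi_split m (rho : R) (mm r p q : 'rV[R]_m) : exists al K, 0 <= K /\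
  (forall t, 0 <= t <= 1 -> phi rho mm r p q t <= phi rho mm r p q 0 + t * al + t ^+ 2 * K) /\
  phi rho mm r p q 1 = phi rho mm r p q 0 + al + (dotv (mm + rho *: r) q + rho / 2 * sqn (p + q)).
Proof.
exists (dotv mm p + rho * dotv r p).
exists (`|dotv mm q + rho * dotv r q + rho / 2 * sqn p| + `|rho * dotv p q| + `|rho / 2 * sqn q|).
split; last split.
- by rewrite !addr_ge0.
- by move=> t ht; apply: phi_ub.
- exact: phi1.
Qed.
End Gen2.

Section Gen3.
Variable R : realType.
Lemma quad_exp m (mm A e : 'rV[R]_m) (c t : R) :
  dotv mm (A + t *: e) + c * sqn (A + t *: e)
  = (dotv mm A + c * sqn A) + t * (dotv mm e + 2 * c * dotv A e) + t ^+ 2 * (c * sqn e).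
Proof. rewrite sqnD sqnZ dotvDr !dotvZr; ring. Qed.

Lemma sqn_exp m (A e : 'rV[R]_m) (c t : R) :
  c * sqn (A + t *: e) = c * sqn A + t * (2 * c * dotv A e) + t ^+ 2 * (c * sqn e).
Proof. rewrite sqnD sqnZ !dotvZr; ring. Qed.

Lemma sum_quad (I : finType) (c a g : I -> R) (t : R) :
  \sum_i (c i + t * a i + t ^+ 2 * g i) = \sum_i c i + t * \sum_i a i + t ^+ 2 * \sum_i g i.
Proof. by rewrite !big_split /= -!mulr_sumr. Qed.

Lemma quad_min_box m (q : 'rV[R]_m -> R) (S : 'rV[R]_m -> Prop) (y0 y1 : 'rV[R]_m) al ga :
  (forall t, q (y0 + t *: (y1 - y0)) = q y0 + t * al + t ^+ 2 * ga) ->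
  (forall t, 0 < t <= 1 -> S (y0 + t *: (y1 - y0))) ->
  (forall W, S W -> q y0 <= q W) ->
  ga <= q y1 - q y0.
Proof.
move=> hq hS hmin.
have := @quad_min R (fun t => q (y0 + t *: (y1 - y0))) al ga.
have e1 : y0 + (y1 - y0) = y1 by rewrite addrC subrK.
rewrite /= scale0r addr0 scale1r e1; apply.
- by move=> t; rewrite hq.
- by move=> t ht; apply: hmin; apply: hS.
Qed.
End Gen3.

End MT5.
Import MT5.

Module MT4.
Set Implicit Arguments. Unset Strict Implicit.

Section FP.
Variable R : realType.

Lemma affine_path n (a : 'rV[R]_n -> R) (x d : 'rV[R]_n) : affine_fun a ->
  exists al, forall t, a (x + t *: d) = a x + t * al.
Proof.
case=> w [b ha]; exists (dotv w d) => t.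
rewrite !ha dotvDr dotvZr; ring.
Qed.

Lemma quad_path n (u : 'rV[R]_n) g (x d : 'rV[R]_n) : quad_comp u g ->
  exists lw : R * R, forall t, g (x + t *: d) = g x + t * lw.1 + t ^+ 2 * lw.2.
Proof.
case=> -[a [b [c [ha hb hc hg]]]] _.
have [al Ha] := affine_path x d ha.
have [be Hb] := affine_path x d hb.
have [ga Hc] := affine_path x d hc.
case: hg => hg.
  exists (al + 2 * c x * ga, ga ^+ 2) => t /=.
  by rewrite !hg Ha Hc; ring.
exists (2 * c x * ga - a x * be - b x * al, ga ^+ 2 - al * be) => t /=.
by rewrite !hg Ha Hb Hc; ring.
Qed.

Lemma F_path n N (P : problem R n N) u i (x d : 'rV[R]_n) :
  F_admissible P u ->
  exists W, forall t, Ff P i (x + t *: d) = Ff P i x + t *: 'd (Ff P i) x d + t ^+ 2 *: W.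
Proof.
move=> hF.
have /fin_all_exists [lw Hlw] : forall j : 'I_(pdim P i), exists lw : R * R,
    forall t, Ff P i (x + t *: d) ord0 j = Ff P i x ord0 j + t * lw.1 + t ^+ 2 * lw.2.
  by move=> j; apply: (quad_path _ _ (hF i j)).
have HL : forall t, Ff P i (x + t *: d) = Ff P i x + t *: (\row_j (lw j).1)
    + t ^+ 2 *: (\row_j (lw j).2).
  by move=> t; apply/rowP => j; rewrite !mxE Hlw ord1.
have dF : differentiable (Ff P i) x.
  apply: vec_diff => j; apply: quad_diff; exact: hF.
rewrite (@diff_quadpath _ _ _ _ x d _ _ dF HL).
by exists (\row_j (lw j).2).
Qed.
End FP.

End MT4.
Import MT4.

Module MT6.
Set Implicit Arguments. Unset Strict Implicit.

Section Blk.
Variables (R : realType) (n M : nat) (blk : 'I_n -> 'I_M).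

Lemma gs_tel (f : 'rV[R]_n -> R) (Xn Xo : 'rV[R]_n) :
  \sum_(l < M) (f (gsS blk Xn Xo l) - f (gsI blk Xn Xo l)) = f Xo - f Xn.
Proof.
pose g (m : nat) : 'rV[R]_n := \row_j (if (blk j < m)%N then Xn ord0 j else Xo ord0 j).
have -> : f Xo - f Xn = - f (g M) - - f (g 0%N).
  have -> : g M = Xn by apply/rowP => j; rewrite mxE ltn_ord.
  have -> : g 0%N = Xo by apply/rowP => j; rewrite mxE.
  by rewrite opprK addrC.
rewrite -(@telescope_sumr_eq _ 0 M (fun m => - f (g m)) (fun m => f (g m) - f (g m.+1))) // ?big_mkord; last by move=> m _; rewrite opprK addrC.
apply: eq_bigr => l _.
have -> : gsS blk Xn Xo l = g l by [].
have -> : gsI blk Xn Xo l = g l.+1 by apply/rowP => j; rewrite !mxE.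
by [].
Qed.

Lemma blk_sqn (v : 'rV[R]_n) : \sum_(l < M) sqn (blockv blk l v) = sqn v.
Proof.
rewrite /sqn /dotv exchange_big /=; apply: eq_bigr => j _.
rewrite (bigD1 (blk j)) //= !mxE eqxx big1 ?addr0 // => l hl.
by rewrite !mxE eq_sym (negbTE hl) mulr0.
Qed.

Lemma gsSI (Xn Xo : 'rV[R]_n) l :
  gsS blk Xn Xo l = gsI blk Xn Xo l + blockv blk l (Xo - Xn).
Proof.
apply/rowP => j; rewrite !mxE.
case: (ltngtP (blk j) l) => h.
- by rewrite -val_eqE /= (ltn_eqF h) addr0.
- by rewrite -val_eqE /= (gtn_eqF h) addr0.
- have -> : blk j = l by apply/val_inj.
  by rewrite eqxx addrC subrK.
Qed.

Lemma repl_path (Xn Xo : 'rV[R]_n) l (t : R) :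
  repl blk l (gsS blk Xn Xo l) (Xn + t *: (Xo - Xn))
  = gsI blk Xn Xo l + t *: blockv blk l (Xo - Xn).
Proof.
apply/rowP => j; rewrite !mxE.
case: (ltngtP (blk j) l) => h.
- by rewrite -val_eqE /= (ltn_eqF h) mulr0 addr0.
- by rewrite -val_eqE /= (gtn_eqF h) mulr0 addr0.
- have -> : blk j = l by apply/val_inj.
  by rewrite eqxx.
Qed.

Lemma l1blk_scale l (v : 'rV[R]_n) (s : R) : 0 <= s ->
  l1blk blk l (s *: v) = s * l1blk blk l v.
Proof.
move=> s0; rewrite /l1blk mulr_sumr; apply: eq_bigr => j _.
by rewrite mxE normrM ger0_norm.
Qed.

Lemma l1blkN l (v : 'rV[R]_n) : l1blk blk l (- v) = l1blk blk l v.
Proof. by rewrite /l1blk; apply: eq_bigr => j _; rewrite mxE normrN. Qed.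

Lemma blockvZ l (v : 'rV[R]_n) (s : R) : blockv blk l (s *: v) = s *: blockv blk l v.
Proof. by apply/rowP => j; rewrite !mxE; case: ifP; rewrite ?mulr0. Qed.

Lemma blockvN l (v : 'rV[R]_n) : blockv blk l (- v) = - blockv blk l v.
Proof. by apply/rowP => j; rewrite !mxE; case: ifP; rewrite ?oppr0. Qed.
End Blk.

End MT6.
Import MT6.

Module MT7.
Set Implicit Arguments. Unset Strict Implicit.

Section LagLemmas.
Variables (R : realType) (n N : nat) (P : problem R n N) (rho : 'I_N -> R).

Lemma LagE6 i (x Zv : 'rV[R]_n) (Yf mf : cfam P i) :
  Lag P rho i x Zv Yf mf = dotv (f0 P) x
  + (dotv (mf cpX) (x - Zv + Yf cpX) + rho i / 2 * sqn (x - Zv + Yf cpX))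
  + (dotv (mf cnX) (Zv - x + Yf cnX) + rho i / 2 * sqn (Zv - x + Yf cnX))
  + (dotv (mf cF) (Ff P i x + Yf cF) + rho i / 2 * sqn (Ff P i x + Yf cF))
  + (dotv (mf cG) (x *m GM P i + G0 P i + Yf cG) + rho i / 2 * sqn (x *m GM P i + G0 P i + Yf cG))
  + (dotv (mf cpH) (x *m HM P i + H0 P i + Yf cpH) + rho i / 2 * sqn (x *m HM P i + H0 P i + Yf cpH))
  + (dotv (mf cnH) (- (x *m HM P i + H0 P i) + Yf cnH) + rho i / 2 * sqn (- (x *m HM P i + H0 P i) + Yf cnH)).
Proof. rewrite /Lag /clist !big_cons !big_nil /=. by field. Qed.

Lemma resid_add i (x Zv : 'rV[R]_n) c (y e : 'rV[R]_(cdim P i c)) :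
  resid P i x Zv c (y + e) = resid P i x Zv c y + e.
Proof. by case: c y e => y e /=; rewrite addrA. Qed.

Lemma LagEs i (x Zv : 'rV[R]_n) (Yf mf : cfam P i) :
  Lag P rho i x Zv Yf mf = dotv (f0 P) x
  + \sum_(c <- clist) (dotv (mf c) (resid P i x Zv c (Yf c))
                       + rho i / 2 * sqn (resid P i x Zv c (Yf c))).
Proof. by rewrite /Lag big_split /= mulr_sumr addrA. Qed.

End LagLemmas.

Section Main.
Variables (R : realType) (n N M : nat) (P : problem R n N)
  (u : 'rV[R]_n) (uY : forall i : 'I_N, cfam P i)
  (blk : 'I_n -> 'I_M) (rho : 'I_N -> R)
  (X : nat -> 'I_N -> 'rV[R]_n) (Z : nat -> 'rV[R]_n)
  (Y : nat -> forall i : 'I_N, cfam P i) (mu : nat -> forall i : 'I_N, cfam P i)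
  (sigma1 sigma2 : nat -> 'I_N -> 'I_M -> R) (tau : nat -> R)
  (gamma : nat -> 'I_N -> cls -> R).
Hypothesis hF : F_admissible P u.
Hypothesis hrho : forall i, 0 < rho i.
Hypothesis hs1 : forall k i l, 0 <= sigma1 k i l.
Hypothesis hs2 : forall k i l, 0 < sigma2 k i l.
Hypothesis htau : forall k, 0 < tau k.
Hypothesis hgam : forall k i c, 0 < gamma k i c.
Hypothesis hX0 : forall i, inbox u (X 0%N i).
Hypothesis hZ0 : inbox u (Z 0%N).
Hypothesis hY0 : forall i c, inslackbox (uY i c) (Y 0%N i c).
Hypothesis hU1 : forall k i l, inbox_blk blk u l (X k.+1 i) /\
     forall W, inbox_blk blk u l W ->
       objX blk rho X Z Y mu sigma1 sigma2 k i l (X k.+1 i)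
       <= objX blk rho X Z Y mu sigma1 sigma2 k i l W.
Hypothesis hU2 : forall k, inbox u (Z k.+1) /\
     forall W, inbox u W -> objZ rho X Z Y mu tau k (Z k.+1) <= objZ rho X Z Y mu tau k W.
Hypothesis hU3 : forall k i c, inslackbox (uY i c) (Y k.+1 i c) /\
     forall y, inslackbox (uY i c) y ->
       objY rho X Z Y mu gamma k i c (Y k.+1 i c) <= objY rho X Z Y mu gamma k i c y.

Lemma Xbox k i : inbox u (X k i).
Proof.
case: k => [|k]; first exact: hX0.
by move=> j; exact: ((hU1 k i (blk j)).1 j (eqxx _)).
Qed.

Lemma Zbox k : inbox u (Z k).
Proof. by case: k => [|k]; [exact: hZ0 | exact: (hU2 k).1]. Qed.

Lemma Ybox k i c : inslackbox (uY i c) (Y k i c).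
Proof. by case: k => [|k]; [exact: hY0 | exact: (hU3 k i c).1]. Qed.

Lemma XL k i l :
  sigma1 k i l * l1blk blk l (X k i - X k.+1 i) + Uk blk rho X Y mu k i l
  + sigma2 k i l * sqn (blockv blk l (X k.+1 i - X k i))
  + rho i * sqn (blockv blk l (X k.+1 i - X k i))
  + rho i / 2 * (sqn (Ff P i (gsI blk (X k.+1 i) (X k i) l) - Ff P i (gsS blk (X k.+1 i) (X k i) l))
                 + sqn (blockv blk l (X k.+1 i - X k i) *m GM P i)
                 + 2 * sqn (blockv blk l (X k.+1 i - X k i) *m HM P i))
  <= Lag P rho i (gsS blk (X k.+1 i) (X k i) l) (Z k) (Y k i) (mu k i)
     - Lag P rho i (gsI blk (X k.+1 i) (X k i) l) (Z k) (Y k i) (mu k i).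
Proof.
set Xn := X k.+1 i; set Xo := X k i.
set xI := gsI blk Xn Xo l; set xS := gsS blk Xn Xo l.
set d := blockv blk l (Xo - Xn).
have hS : xS = xI + d by rewrite /xS gsSI.
have [Wv hW] := @F_path R n N P u i xI d hF.
set Lf := 'd (Ff P i) xI d in hW.
set Zk := Z k; set Yk := Y k i; set mk := mu k i.
pose h t := Lag P rho i (xI + t *: d) Zk Yk mk.
have eX : forall t : R, xI + t *: d - Zk + Yk cpX = (xI - Zk + Yk cpX) + t *: d + t ^+ 2 *: 0.
  by move=> t; apply/rowP => j; rewrite !mxE; ring.
have enX : forall t : R, Zk - (xI + t *: d) + Yk cnX = (Zk - xI + Yk cnX) + t *: (- d) + t ^+ 2 *: 0.
  by move=> t; apply/rowP => j; rewrite !mxE; ring.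
have eF : forall t : R, Ff P i (xI + t *: d) + Yk cF = (Ff P i xI + Yk cF) + t *: Lf + t ^+ 2 *: Wv.
  by move=> t; rewrite hW; apply/rowP => j; rewrite !mxE; ring.
have eG : forall t : R, (xI + t *: d) *m GM P i + G0 P i + Yk cG
   = (xI *m GM P i + G0 P i + Yk cG) + t *: (d *m GM P i) + t ^+ 2 *: 0.
  by move=> t; rewrite mulmxDl -scalemxAl; apply/rowP => j; rewrite !mxE; ring.
have epH : forall t : R, (xI + t *: d) *m HM P i + H0 P i + Yk cpH
   = (xI *m HM P i + H0 P i + Yk cpH) + t *: (d *m HM P i) + t ^+ 2 *: 0.
  by move=> t; rewrite mulmxDl -scalemxAl; apply/rowP => j; rewrite !mxE; ring.
have enH : forall t : R, - ((xI + t *: d) *m HM P i + H0 P i) + Yk cnH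
   = (- (xI *m HM P i + H0 P i) + Yk cnH) + t *: (- (d *m HM P i)) + t ^+ 2 *: 0.
  by move=> t; rewrite mulmxDl -scalemxAl; apply/rowP => j; rewrite !mxE; ring.
pose ph1 := phi (rho i) (mk cpX) (xI - Zk + Yk cpX) d 0.
pose ph2 := phi (rho i) (mk cnX) (Zk - xI + Yk cnX) (- d) 0.
pose ph3 := phi (rho i) (mk cF) (Ff P i xI + Yk cF) Lf Wv.
pose ph4 := phi (rho i) (mk cG) (xI *m GM P i + G0 P i + Yk cG) (d *m GM P i) 0.
pose ph5 := phi (rho i) (mk cpH) (xI *m HM P i + H0 P i + Yk cpH) (d *m HM P i) 0.
pose ph6 := phi (rho i) (mk cnH) (- (xI *m HM P i + H0 P i) + Yk cnH) (- (d *m HM P i)) 0.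
have hE : forall t, h t = dotv (f0 P) xI + t * dotv (f0 P) d
   + ph1 t + ph2 t + ph3 t + ph4 t + ph5 t + ph6 t.
  move=> t; rewrite /h LagE6 eX enX eF eG epH enH dotvDr dotvZr.
  rewrite /ph1 /ph2 /ph3 /ph4 /ph5 /ph6 /phi.
  ring.
set L := l1blk blk l (Xn - Xo); set S := sqn (blockv blk l (Xn - Xo)).
have hobj : forall t, 0 <= t <= 1 ->
   objX blk rho X Z Y mu sigma1 sigma2 k i l (Xn + t *: (Xo - Xn))
   = h t + sigma1 k i l * ((1 - t) * L) + sigma2 k i l / 2 * ((1 - t) ^+ 2 * S).
  move=> t /andP[t0 t1].
  rewrite /objX -/Xn -/Xo repl_path -/d -/Zk -/Yk -/mk.
  have -> : Xn + t *: (Xo - Xn) - Xo = (1 - t) *: (Xn - Xo).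
    by apply/rowP => j; rewrite !mxE; ring.
  rewrite l1blk_scale ?subr_ge0 // blockvZ sqnZ.
  by [].
have hmin : forall t, 0 < t <= 1 ->
   h 0 + sigma1 k i l * L + sigma2 k i l / 2 * S
   <= h t + sigma1 k i l * ((1 - t) * L) + sigma2 k i l / 2 * ((1 - t) ^+ 2 * S).
  move=> t /andP[t0 t1].
  have hb : inbox_blk blk u l (Xn + t *: (Xo - Xn)).
    move=> j hj; rewrite !mxE.
    apply: box_conv; [exact: ((hU1 k i l).1 j hj) | exact: (Xbox k i j) | ].
    by rewrite (ltW t0) t1.
  have := (hU1 k i l).2 _ hb.
  rewrite -/Xn hobj ?(ltW t0) ?t1 //.
  have := hobj 0; rewrite scale0r addr0 lexx ler01 => /(_ isT) ->.
  by rewrite subr0 mul1r expr1n mul1r.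
have [a1 [K1 [K10 [hb1 he1]]]] := phi_split (rho i) (mk cpX) (xI - Zk + Yk cpX) d 0.
have [a2 [K2 [K20 [hb2 he2]]]] := phi_split (rho i) (mk cnX) (Zk - xI + Yk cnX) (- d) 0.
have [a3 [K3 [K30 [hb3 he3]]]] := phi_split (rho i) (mk cF) (Ff P i xI + Yk cF) Lf Wv.
have [a4 [K4 [K40 [hb4 he4]]]] := phi_split (rho i) (mk cG) (xI *m GM P i + G0 P i + Yk cG) (d *m GM P i) 0.
have [a5 [K5 [K50 [hb5 he5]]]] := phi_split (rho i) (mk cpH) (xI *m HM P i + H0 P i + Yk cpH) (d *m HM P i) 0.
have [a6 [K6 [K60 [hb6 he6]]]] := phi_split (rho i) (mk cnH) (- (xI *m HM P i + H0 P i) + Yk cnH) (- (d *m HM P i)) 0.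
set A := dotv (f0 P) d + a1 + a2 + a3 + a4 + a5 + a6.
set Kt := K1 + K2 + K3 + K4 + K5 + K6.
have hS0 : 0 <= S by exact: sqn_ge0.
have hs1' := hs1 k i l; have hs2' := hs2 k i l.
have hA : 0 <= A - sigma1 k i l * L - sigma2 k i l * S.
  apply: (@lim0 _ _ (Kt + sigma2 k i l / 2 * S)).
    by apply: addr_ge0; [rewrite /Kt; lra | apply: mulr_ge0 => //; lra].
  move=> t /andP[t0 t1].
  have ht : 0 <= t <= 1 by rewrite (ltW t0) t1.
  have := hmin t; rewrite t0 t1 => /(_ isT).
  rewrite (hE t) (hE 0).
  move: (hb1 t ht) (hb2 t ht) (hb3 t ht) (hb4 t ht) (hb5 t ht) (hb6 t ht).
  rewrite -/ph1 -/ph2 -/ph3 -/ph4 -/ph5 -/ph6 => u1 u2 u3 u4 u5 u6 hm.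
  have : 0 <= t * (A - sigma1 k i l * L - sigma2 k i l * S + t * (Kt + sigma2 k i l / 2 * S)).
    rewrite /A /Kt; nra.
  rewrite pmulr_rge0 //; lra.
have h1 : h 1 = Lag P rho i xS Zk Yk mk by rewrite /h scale1r -hS.
have h0 : h 0 = Lag P rho i xI Zk Yk mk by rewrite /h scale0r addr0.
have eFS : Ff P i xS = Ff P i xI + Lf + Wv.
  by rewrite hS -{1}[d]scale1r hW expr1n !scale1r.
have hd : d = - blockv blk l (Xn - Xo) by rewrite /d -blockvN opprB.
rewrite -h1 -h0 (hE 1) (hE 0) /ph1 /ph2 /ph3 /ph4 /ph5 /ph6 he1 he2 he3 he4 he5 he6.
rewrite /Uk /= -/Xn -/Xo -/xI -/xS -/d -/Lf eFS.
rewrite -opprB l1blkN -/L.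
have -> : Ff P i xI + Lf + Wv - Ff P i xI - Lf = Wv.
  by apply/rowP => j; rewrite !mxE; ring.
have -> : Ff P i xI - (Ff P i xI + Lf + Wv) = - (Lf + Wv).
  by apply/rowP => j; rewrite !mxE; ring.
have hb : blockv blk l (Xn - Xo) = - d by rewrite hd opprK.
have sd : sqn d = S by rewrite hd sqnN.
rewrite !dotv0r !addr0 !sqnN sd hb !mulNmx !sqnN.
rewrite /A in hA.
lra.
Qed.

Lemma XA k i :
  \sum_(l < M) sigma2 k i l * sqn (blockv blk l (X k.+1 i - X k i))
  + rho i * sqn (X k.+1 i - X k i)
  + rho i / 2 * \sum_(l < M)
       ( sqn (Ff P i (gsI blk (X k.+1 i) (X k i) l) - Ff P i (gsS blk (X k.+1 i) (X k i) l))
       + sqn (blockv blk l (X k.+1 i - X k i) *m GM P i)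
       + 2 * sqn (blockv blk l (X k.+1 i - X k i) *m HM P i))
  + \sum_(l < M) (sigma1 k i l * l1blk blk l (X k i - X k.+1 i) + Uk blk rho X Y mu k i l)
  <= Lag P rho i (X k i) (Z k) (Y k i) (mu k i) - Lag P rho i (X k.+1 i) (Z k) (Y k i) (mu k i).
Proof.
rewrite -(gs_tel blk (fun x => Lag P rho i x (Z k) (Y k i) (mu k i))).
rewrite -(blk_sqn blk (X k.+1 i - X k i)) !mulr_sumr -!big_split /=.
apply: ler_sum => l _; have := XL k i l; lra.
Qed.

Lemma YC k i c :
  (gamma k i c + rho i / 2) * sqn (Y k.+1 i c - Y k i c)
  <= (dotv (mu k i c) (resid P i (X k.+1 i) (Z k.+1) c (Y k i c))
      + rho i / 2 * sqn (resid P i (X k.+1 i) (Z k.+1) c (Y k i c)))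
   - (dotv (mu k i c) (resid P i (X k.+1 i) (Z k.+1) c (Y k.+1 i c))
      + rho i / 2 * sqn (resid P i (X k.+1 i) (Z k.+1) c (Y k.+1 i c))).
Proof.
set y0 := Y k.+1 i c; set y1 := Y k i c.
set e := y1 - y0.
set al := dotv (mu k i c) e + 2 * (rho i / 2) * dotv (resid P i (X k.+1 i) (Z k.+1) c y0) e
   + 2 * (gamma k i c / 2) * dotv (y0 - y1) e.
set ga := (rho i / 2 + gamma k i c / 2) * sqn e.
have ee : forall t : R, y0 + t *: e - y1 = (y0 - y1) + t *: e.
  by move=> t; apply/rowP => j; rewrite !mxE; ring.
have hq : forall t, objY rho X Z Y mu gamma k i c (y0 + t *: (y1 - y0))
    = objY rho X Z Y mu gamma k i c y0 + t * al + t ^+ 2 * ga.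
  move=> t; rewrite /objY -/e resid_add -/y1 ee quad_exp sqn_exp /al /ga.
  ring.
have := quad_min_box hq (S := inslackbox (uY i c)).
have hB : forall t, 0 < t <= 1 -> inslackbox (uY i c) (y0 + t *: (y1 - y0)).
  move=> t /andP[t0 t1] j; rewrite !mxE; apply: box_conv.
  - exact: (@Ybox k.+1 i c j).
  - exact: (@Ybox k i c j).
  - by rewrite (ltW t0) t1.
move=> /(_ hB (hU3 k i c).2).
rewrite /objY subrr /sqn dotv0r mulr0 addr0 -/(sqn _) -/(sqn _) /ga /e (sqnB y1 y0).
rewrite -/y1 /sqn; lra.
Qed.

Lemma YA k i :
  \sum_(c <- clist) (gamma k i c + rho i / 2) * sqn (Y k.+1 i c - Y k i c)
  <= Lag P rho i (X k.+1 i) (Z k.+1) (Y k i) (mu k i)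
     - Lag P rho i (X k.+1 i) (Z k.+1) (Y k.+1 i) (mu k i).
Proof.
suff H : \sum_(c <- clist) (gamma k i c + rho i / 2) * sqn (Y k.+1 i c - Y k i c)
  <= \sum_(c <- clist)
     ((dotv (mu k i c) (resid P i (X k.+1 i) (Z k.+1) c (Y k i c))
      + rho i / 2 * sqn (resid P i (X k.+1 i) (Z k.+1) c (Y k i c)))
   - (dotv (mu k i c) (resid P i (X k.+1 i) (Z k.+1) c (Y k.+1 i c))
      + rho i / 2 * sqn (resid P i (X k.+1 i) (Z k.+1) c (Y k.+1 i c)))).
  by move: H; rewrite sumrB !LagEs; lra.
apply: ler_sum => c _; exact: YC.
Qed.

Lemma DA k i :
  Lag P rho i (X k.+1 i) (Z k.+1) (Y k.+1 i) (mu k i)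
  - Lag P rho i (X k.+1 i) (Z k.+1) (Y k.+1 i) (mu k.+1 i)
  = \sum_(c <- clist)
     dotv (mu k i c - mu k.+1 i c) (resid P i (X k.+1 i) (Z k.+1) c (Y k.+1 i c)).
Proof.
have -> : \sum_(c <- clist)
     dotv (mu k i c - mu k.+1 i c) (resid P i (X k.+1 i) (Z k.+1) c (Y k.+1 i c))
   = \sum_(c <- clist) dotv (mu k i c) (resid P i (X k.+1 i) (Z k.+1) c (Y k.+1 i c))
   - \sum_(c <- clist) dotv (mu k.+1 i c) (resid P i (X k.+1 i) (Z k.+1) c (Y k.+1 i c)).
  by rewrite -sumrB; apply: eq_bigr => c _; rewrite dotvBl.
rewrite /Lag; ring.
Qed.

Lemma ZA k :
  \sum_(i < N) (tau k + rho i) * sqn (Z k.+1 - Z k)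
  <= \sum_(i < N) (Lag P rho i (X k.+1 i) (Z k) (Y k i) (mu k i)
                  - Lag P rho i (X k.+1 i) (Z k.+1) (Y k i) (mu k i)).
Proof.
pose zt i (W : 'rV[R]_n) :=
  dotv (mu k i cpX) (X k.+1 i - W + Y k i cpX) + rho i / 2 * sqn (X k.+1 i - W + Y k i cpX)
  + (dotv (mu k i cnX) (W - X k.+1 i + Y k i cnX) + rho i / 2 * sqn (W - X k.+1 i + Y k i cnX)).
have hL : forall i, Lag P rho i (X k.+1 i) (Z k) (Y k i) (mu k i)
                  - Lag P rho i (X k.+1 i) (Z k.+1) (Y k i) (mu k i) = zt i (Z k) - zt i (Z k.+1).
  by move=> i; rewrite !LagE6 /zt; ring.
have hO : forall W, objZ rho X Z Y mu tau k W = \sum_(i < N) (zt i W + tau k / 2 * sqn (W - Z k)).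
  by move=> W; rewrite /objZ; apply: eq_bigr => i _; rewrite /zt; ring.
set z0 := Z k.+1; set z1 := Z k; set e := z1 - z0.
pose A i := X k.+1 i - z0 + Y k i cpX.
pose B i := z0 - X k.+1 i + Y k i cnX.
pose C := z0 - z1.
pose cc i := dotv (mu k i cpX) (A i) + rho i / 2 * sqn (A i)
   + (dotv (mu k i cnX) (B i) + rho i / 2 * sqn (B i)) + tau k / 2 * sqn C.
pose aa i := dotv (mu k i cpX) (- e) + 2 * (rho i / 2) * dotv (A i) (- e)
   + (dotv (mu k i cnX) e + 2 * (rho i / 2) * dotv (B i) e) + 2 * (tau k / 2) * dotv C e.
pose gg i := rho i / 2 * sqn (- e) + rho i / 2 * sqn e + tau k / 2 * sqn e.
have hexp : forall t, objZ rho X Z Y mu tau k (z0 + t *: e)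
    = \sum_(i < N) cc i + t * \sum_(i < N) aa i + t ^+ 2 * \sum_(i < N) gg i.
  move=> t; rewrite hO -sum_quad; apply: eq_bigr => i _.
  have e1 : X k.+1 i - (z0 + t *: e) + Y k i cpX = A i + t *: (- e).
    by apply/rowP => j; rewrite !mxE; ring.
  have e2 : z0 + t *: e - X k.+1 i + Y k i cnX = B i + t *: e.
    by apply/rowP => j; rewrite !mxE; ring.
  have e3 : z0 + t *: e - Z k = C + t *: e.
    by apply/rowP => j; rewrite !mxE; ring.
  rewrite /zt e1 e2 e3 !quad_exp sqn_exp /cc /aa /gg; ring.
have hq : forall t, objZ rho X Z Y mu tau k (z0 + t *: (z1 - z0))
    = objZ rho X Z Y mu tau k z0 + t * \sum_(i < N) aa i + t ^+ 2 * \sum_(i < N) gg i.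
  move=> t; rewrite -/e hexp.
  have := hexp 0; rewrite scale0r addr0 => ->; ring.
have := quad_min_box hq (S := inbox u).
have hB : forall t, 0 < t <= 1 -> inbox u (z0 + t *: (z1 - z0)).
  move=> t /andP[t0 t1] j; rewrite !mxE; apply: box_conv.
  - exact: (@Zbox k.+1 j).
  - exact: (@Zbox k j).
  - by rewrite (ltW t0) t1.
move=> /(_ hB (hU2 k).2).
have h1 : objZ rho X Z Y mu tau k z1 = \sum_(i < N) zt i z1.
  by rewrite hO subrr /sqn dotv0r; apply: eq_bigr => i _; rewrite mulr0 addr0.
have h0 : objZ rho X Z Y mu tau k z0 = \sum_(i < N) zt i z0 + \sum_(i < N) tau k / 2 * sqn (z0 - z1).
  by rewrite hO big_split.
rewrite h1 h0 /gg.
have hL' : \sum_(i < N) (Lag P rho i (X k.+1 i) z1 (Y k i) (mu k i)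
      - Lag P rho i (X k.+1 i) z0 (Y k i) (mu k i)) = \sum_(i < N) (zt i z1 - zt i z0).
  by apply: eq_bigr => i _; exact: hL.
rewrite hL' sumrB.
have -> : \sum_(i < N) (rho i / 2 * sqn (- e) + rho i / 2 * sqn e + tau k / 2 * sqn e)
   = \sum_(i < N) (tau k + rho i) * sqn (z0 - z1) - \sum_(i < N) tau k / 2 * sqn (z0 - z1).
  rewrite -sumrB; apply: eq_bigr => i _; rewrite sqnN /e (sqnB z1 z0); by field.
lra.
Qed.

Lemma final k :
    Ltot rho X Z Y mu k.+1 + Dk X Z Y mu k + Pk blk rho X Z Y sigma2 tau gamma k
    + \sum_(i < N) \sum_(l < M)
        (sigma1 k i l * l1blk blk l (X k i - X k.+1 i) + Uk blk rho X Y mu k i l)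
    <= Ltot rho X Z Y mu k.
Proof.
have hz := ZA k.
rewrite /Ltot /Dk /Pk -!big_split /=.
apply: (@le_trans _ _ (\sum_(i < N)
   (Lag P rho i (X k i) (Z k) (Y k i) (mu k i)
    - (Lag P rho i (X k.+1 i) (Z k) (Y k i) (mu k i)
       - Lag P rho i (X k.+1 i) (Z k.+1) (Y k i) (mu k i))
    + (tau k + rho i) * sqn (Z k.+1 - Z k)))).
  apply: ler_sum => i _.
  have h1 := XA k i; have h3 := YA k i; have h4 := DA k i.
  lra.
rewrite big_split sumrB /=.
lra.
Qed.

End Main.

End MT7.
Import MT7.

Theorem lemma1 (R : realType) (n N M : nat) (P : problem R n N)
  (u : 'rV[R]_n) (uY : forall i : 'I_N, cfam P i)
  (blk : 'I_n -> 'I_M) (rho : 'I_N -> R)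
  (X : nat -> 'I_N -> 'rV[R]_n) (Z : nat -> 'rV[R]_n)
  (Y : nat -> forall i : 'I_N, cfam P i) (mu : nat -> forall i : 'I_N, cfam P i)
  (sigma1 sigma2 : nat -> 'I_N -> 'I_M -> R) (tau : nat -> R)
  (gamma : nat -> 'I_N -> cls -> R) :
  (* data *)
  (forall j, 0 < u ord0 j) ->
  F_admissible P u ->
  (forall (j1 j2 : 'I_n), (j1 <= j2)%N -> (blk j1 <= blk j2)%N) ->
  (forall i c j, 0 < uY i c ord0 j) ->
  (forall i, 0 < rho i) ->
  (* parameters *)
  (forall k i l, 0 <= sigma1 k i l) ->
  (forall k i l, 0 < sigma2 k i l) ->
  (forall k, 0 < tau k) ->
  (forall k i c, 0 < gamma k i c) ->
  (* dual sequences *)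
  (forall k i j, 0 <= mu k i cF ord0 j) ->
  (* initial values *)
  (forall i, inbox u (X 0%N i)) ->
  inbox u (Z 0%N) ->
  (forall i c, inslackbox (uY i c) (Y 0%N i c)) ->
  (* (U1) *)
  (forall k i l, inbox_blk blk u l (X k.+1 i) /\
     forall W, inbox_blk blk u l W ->
       objX blk rho X Z Y mu sigma1 sigma2 k i l (X k.+1 i)
       <= objX blk rho X Z Y mu sigma1 sigma2 k i l W) ->
  (* (U2) *)
  (forall k, inbox u (Z k.+1) /\
     forall W, inbox u W -> objZ rho X Z Y mu tau k (Z k.+1) <= objZ rho X Z Y mu tau k W) ->
  (* (U3) *)
  (forall k i c, inslackbox (uY i c) (Y k.+1 i c) /\
     forall y, inslackbox (uY i c) y ->
       objY rho X Z Y mu gamma k i c (Y k.+1 i c) <= objY rho X Z Y mu gamma k i c y) ->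
  forall k : nat,
    Ltot rho X Z Y mu k.+1 + Dk X Z Y mu k + Pk blk rho X Z Y sigma2 tau gamma k
    + \sum_(i < N) \sum_(l < M)
        (sigma1 k i l * l1blk blk l (X k i - X k.+1 i) + Uk blk rho X Y mu k i l)
    <= Ltot rho X Z Y mu k.
Proof.
Proof.
move=> hu hF hblk huY hrho hs1 hs2 htau hgam hmu hX0 hZ0 hY0 hU1 hU2 hU3 k.
exact: (final hF hs1 hs2 hX0 hZ0 hY0 hU1 hU2 hU3 k).
Qed.
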